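(* For any $k\geq1$, the maps $\Delta_\prec,\Delta_\succ$ endow $\mathbf{PM}_k^+$ with a codendriform coalgebra structure: for every $x\in\mathbf{PM}_k^+$, $\Delta(x)=\mathbf{F}_\emptyset\otimes x+\Delta_\prec(x)+\Delta_\succ(x)+x\otimes\mathbf{F}_\emptyset$, and, with $\bar\Delta=\Delta_\prec+\Delta_\succ$ and $I$ the identity, $(\Delta_\prec\otimes I)\circ\Delta_\prec=(I\otimes\bar\Delta)\circ\Delta_\prec$, $(\Delta_\succ\otimes I)\circ\Delta_\prec=(I\otimes\Delta_\prec)\circ\Delta_\succ$, $(\bar\Delta\otimes I)\circ\Delta_\succ=(I\otimes\Delta_\succ)\circ\Delta_\succ$ on $\mathbf{PM}_k^+$.
   Context: $A_k=\{0,\dots,k\}$. A $k$-packed matrix of size $n$ is an $n\times n$ matrix over $A_k$ with a nonzero entry in each row and column ($\emptyset$ of size 0). $\operatorname{cp}(N)$ deletes the null rows and null columns of $N$. A column decomposition $M=L\bullet R$ of a $k$-packed $M$ of size $n$ is a writing $M=[L\mid R]$ with $L$ the first $j$ columns and $R$ the last $n-j$ columns ($0\le j\le n$) such that $\operatorname{cp}(L),\operatorname{cp}(R)$ are square. $\mathbf{PM}_k$ is the vector space with basis $(\mathbf{F}_M)$ and coproduct $\Delta(\mathbf{F}_M)=\sum_{M=L\bullet R}\mathbf{F}_{\operatorname{cp}(L)}\otimes\mathbf{F}_{\operatorname{cp}(R)}$; $\mathbf{PM}_k^+$ is the span of $\mathbf{F}_M$, $M\neq\emptyset$. For nonempty $M$,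 $\Delta_\prec(\mathbf{F}_M)$ (resp. $\Delta_\succ(\mathbf{F}_M)$) is the sum of $\mathbf{F}_{\operatorname{cp}(L)}\otimes\mathbf{F}_{\operatorname{cp}(R)}$ over column decompositions $M=L\bullet R$ in which $L$ and $R$ each have at least one column and the nonzero entries of the last row of $M$ lie in $L$ (resp. in $R$); extended linearly. *)

(* Defs.v *)
From mathcomp Require Import all_boot all_algebra.
Set Implicit Arguments. Unset Strict Implicit. Unset Printing Implicit Defensive.
Import GRing.Theory.
Local Open Scope ring_scope.

(** Matrices over A_k = {0..k} are encoded as lists of rows of naturals. *)
Definition mat := seq (seq nat).

(** The empty matrix [::] is the packed matrix of size 0. *)
Definition is_packed (k : nat) (M : mat) : bool :=
  [&& all (fun r => size r == size M) M,
      all (all (fun a => (a <= k)%N)) M,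
      all (has (fun a => a != 0%N)) M &
      all (fun c => has (fun r => nth 0%N r c != 0%N) M) (iota 0 (size M))].

Definition cp (w : nat) (N : mat) : mat :=
  let cols := [seq c <- iota 0 w | has (fun r => nth 0%N r c != 0%N) N] in
  [seq [seq nth 0%N r c | c <- cols] | r <- N & has (fun a => a != 0%N) r].

Definition is_square (N : mat) : bool := all (fun r => size r == size N) N.

Definition leftM (j : nat) (M : mat) : mat := map (take j) M.
Definition rightM (j : nat) (M : mat) : mat := map (drop j) M.

Definition col_dec (M : mat) (j : nat) : bool :=
  [&& (j <= size M)%N, is_square (cp j (leftM j M))
    & is_square (cp (size M - j) (rightM j M))].

Definition lastrow (M : mat) : seq nat := last [::] M.

Section FormalSums.
Variable K : ringType.

(** Elements of the free K-module on a type T are represented by formal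
    linear combinations (lists of (coefficient, basis element)); two of them
    are equal as vectors iff all their coefficients agree ([feq]). *)
Definition coef (T : eqType) (x : seq (K * T)) (t : T) : K :=
  \sum_(p <- x | p.2 == t) p.1.

Definition feq (T : eqType) (x y : seq (K * T)) : Prop :=
  forall t, coef x t = coef y t.

(** linear extension of a map defined on basis elements *)
Definition ext (T U : Type) (f : T -> seq (K * U)) (x : seq (K * T))
  : seq (K * U) :=
  flatten [seq [seq (p.1 * q.1, q.2) | q <- f p.2] | p <- x].

(** tensor product of two basis-level maps, on a basis element a (x) b *)
Definition tens (A B C D : Type) (f : A -> seq (K * C)) (g : B -> seq (K * D))
  (ab : A * B) : seq (K * (C * D)) :=
  [seq (p.1 * q.1, (p.2, q.2)) | p <- f ab.1, q <- g ab.2].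

Definition idb (T : Type) (t : T) : seq (K * T) := [:: (1, t)].

Definition reassoc (A B C : Type) (x : seq (K * (A * (B * C))))
  : seq (K * (A * B * C)) :=
  [seq (p.1, (p.2.1, p.2.2.1, p.2.2.2)) | p <- x].

(** F_empty (x) x  and  x (x) F_empty *)
Definition emptyL (x : seq (K * mat)) : seq (K * (mat * mat)) :=
  [seq (p.1, ([::] : mat, p.2)) | p <- x].
Definition emptyR (x : seq (K * mat)) : seq (K * (mat * mat)) :=
  [seq (p.1, (p.2, [::] : mat)) | p <- x].

Definition Delta (M : mat) : seq (K * (mat * mat)) :=
  [seq (1, (cp j (leftM j M), cp (size M - j) (rightM j M)))
  | j <- iota 0 (size M).+1 & col_dec M j].

Definition Dprec (M : mat) : seq (K * (mat * mat)) :=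
  [seq (1, (cp j (leftM j M), cp (size M - j) (rightM j M)))
  | j <- iota 0 (size M).+1 &
     [&& col_dec M j, (0 < j)%N, (j < size M)%N &
         all (fun a => a == 0%N) (drop j (lastrow M))]].

Definition Dsucc (M : mat) : seq (K * (mat * mat)) :=
  [seq (1, (cp j (leftM j M), cp (size M - j) (rightM j M)))
  | j <- iota 0 (size M).+1 &
     [&& col_dec M j, (0 < j)%N, (j < size M)%N &
         all (fun a => a == 0%N) (take j (lastrow M))]].

Definition Dbar (M : mat) : seq (K * (mat * mat)) := Dprec M ++ Dsucc M.

End FormalSums.

Definition in_PMplus (K : ringType) (k : nat) (x : seq (K * mat)) : bool :=
  all (fun p => is_packed k p.2 && (p.2 != [::])) x.

(* Main.v *)
Require Import Defs.
From mathcomp Require Import all_boot all_algebra.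
From mathcomp Require Import zify.
Set Implicit Arguments. Unset Strict Implicit. Unset Printing Implicit Defensive.

Definition nz (r : seq nat) : bool := has (fun a => a != 0%N) r.
Definition slice (a b : nat) (r : seq nat) : seq nat := take (b - a) (drop a r).
Definition Bk (N : mat) (a b : nat) : mat := filter nz (map (slice a b) N).
Definition cnt (N : mat) (a b : nat) : nat := count (fun r => nz (slice a b r)) N.

Lemma slice_comp a b a' b' r : a' <= b' -> b' <= b - a ->
  slice a' b' (slice a b r) = slice (a + a') (a + b') r.
Proof.
move=> h1 h2; rewrite /slice.
have -> : b - a = (b - a - a') + a' by lia.
rewrite -take_drop take_takel; last lia.
rewrite drop_drop; congr take; [lia|congr drop; lia].
Qed.

Lemma nz_slice_sub a b r : nz (slice a b r) -> nz r.
Proof.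
rewrite /nz /slice => /hasP [x /mem_take /mem_drop hx hx0]; apply/hasP; by exists x.
Qed.

Lemma nz_slice_sub2 a b a' b' r : nz (slice a' b' (slice a b r)) -> nz (slice a b r).
Proof. exact: nz_slice_sub. Qed.

Lemma slice_split a b c r : a <= b -> b <= c ->
  slice a c r = slice a b r ++ slice b c r.
Proof.
move=> h1 h2; rewrite /slice.
have -> : c - a = (b - a) + (c - b) by lia.
rewrite takeD drop_drop; congr (_ ++ take _ (drop _ _)); lia.
Qed.

Lemma nz_split a b c r : a <= b -> b <= c ->
  nz (slice a c r) = nz (slice a b r) || nz (slice b c r).
Proof. by move=> h1 h2; rewrite (slice_split r h1 h2) /nz has_cat. Qed.

Lemma Bk_Bk N a b a' b' : a' <= b' -> b' <= b - a ->
  Bk (Bk N a b) a' b' = Bk N (a + a') (a + b').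
Proof.
move=> h1 h2; rewrite /Bk; elim: N => //= r N IH.
case E: (nz (slice a b r)) => /=.
  by rewrite slice_comp // IH.
rewrite IH -(slice_comp r h1 h2).
case E2: (nz (slice a' b' (slice a b r))) => //.
by rewrite (nz_slice_sub E2) in E.
Qed.

Lemma cnt_Bk N a b a' b' : a' <= b' -> b' <= b - a ->
  cnt (Bk N a b) a' b' = cnt N (a + a') (a + b').
Proof.
move=> h1 h2; rewrite /Bk /cnt; elim: N => //= r N IH.
case E: (nz (slice a b r)) => /=.
  by rewrite slice_comp // IH.
rewrite IH -(slice_comp r h1 h2).
case E2: (nz (slice a' b' (slice a b r))) => //.
by rewrite (nz_slice_sub E2) in E.
Qed.

Lemma size_Bk N a b : size (Bk N a b) = cnt N a b.
Proof. by rewrite /Bk size_filter /cnt count_map. Qed.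

Lemma last_Bk N a b : N != [::] -> nz (slice a b (last [::] N)) ->
  last [::] (Bk N a b) = slice a b (last [::] N).
Proof.
case/lastP: N => // s x _; rewrite last_rcons => h.
by rewrite /Bk map_rcons filter_rcons h last_rcons.
Qed.

Definition good (N : mat) : bool :=
  [&& all (fun r => size r == size N) N, all nz N &
      all (fun c => has (fun r => nth 0%N r c != 0%N) N) (iota 0 (size N))].

Lemma packed_good k M : is_packed k M -> good M.
Proof. by case/and4P => h1 _ h3 h4; apply/and3P. Qed.

Lemma cp_full w N : all (fun r => size r == w) N ->
  (forall c, c < w -> has (fun r => nth 0%N r c != 0%N) N) -> cp w N = filter nz N.
Proof.
move=> hs hc; rewrite /cp.
have -> : [seq c <- iota 0 w | has (fun r => nth 0%N r c != 0%N) N] = iota 0 w.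
  apply/all_filterP/allP => c; rewrite mem_iota => /andP[_ h]; apply: hc; lia.
rewrite -[RHS]map_id; apply/eq_in_map => r; rewrite mem_filter => /andP[_ hr].
move/allP: hs => /(_ r hr) /eqP <-.
by rewrite -{3}(mkseq_nth 0%N r).
Qed.

Section Good.
Variable N : mat.
Hypothesis gN : good N.
Let n := size N.

Lemma gsize r : r \in N -> size r = n.
Proof. by case/and3P: gN => /allP h _ _ /h /eqP. Qed.

Lemma gnz r : r \in N -> nz r.
Proof. by case/and3P: gN => _ /allP h _ /h. Qed.

Lemma gcol c : c < n -> has (fun r => nth 0%N r c != 0%N) N.
Proof. by case/and3P: gN => _ _ /allP h hc; apply: h; rewrite mem_iota. Qed.

Lemma size_slice a b r : r \in N -> a <= b -> b <= n -> size (slice a b r) = b - a.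
Proof. move=> hr h1 h2; rewrite /slice size_take size_drop gsize //; case: ifP; lia. Qed.

Lemma nth_slice a b r c : c < b - a -> nth 0%N (slice a b r) c = nth 0%N r (a + c).
Proof. by move=> h; rewrite /slice nth_take // nth_drop. Qed.

Lemma cp_slice a b : a <= b -> b <= n -> cp (b - a) (map (slice a b) N) = Bk N a b.
Proof.
move=> h1 h2; apply: cp_full.
  by rewrite all_map; apply/allP => r hr /=; rewrite size_slice.
move=> c hc; have := gcol (_ : a + c < n) => /(_ ltac:(lia)) /hasP [r hr hrc].
by apply/hasP; exists (slice a b r); [apply: map_f | rewrite nth_slice].
Qed.

Lemma leftM_slice j : leftM j N = map (slice 0 j) N.
Proof. by apply: eq_map => r; rewrite /slice subn0 drop0. Qed.

Lemma rightM_slice j : j <= n -> rightM j N = map (slice j n) N.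
Proof.
move=> h; apply/eq_in_map => r hr; rewrite /slice take_oversize //.
by rewrite size_drop gsize.
Qed.

Lemma is_square_Bk a b : a <= b -> b <= n ->
  is_square (Bk N a b) = (Bk N a b == [::]) || (cnt N a b == b - a).
Proof.
move=> h1 h2; rewrite /is_square -size_Bk.
have : all (fun r => size r == b - a) (Bk N a b).
  apply/allP => r; rewrite /Bk mem_filter => /andP[_ /mapP [r0 hr0 ->]].
  by rewrite size_slice.
case: (Bk N a b) => //= r s /andP[/eqP -> hs].
rewrite eq_sym; case E: (_ == _) => /=; last by [].
apply/allP => r1 h; move/allP: hs => /(_ r1 h) /eqP ->; by rewrite eq_sym.
Qed.

Lemma cnt_pos a b : a < b -> b <= n -> 0 < cnt N a b.
Proof.
move=> h1 h2; have := gcol (_ : a < n) => /(_ ltac:(lia)) /hasP [r hr hrc].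
rewrite /cnt -has_count; apply/hasP; exists r => //; apply/hasP.
exists (nth 0%N r a) => //.
have -> : nth 0%N r a = nth 0%N (slice a b r) 0 by rewrite nth_slice ?addn0 //; lia.
apply: mem_nth; rewrite size_slice //; lia.
Qed.

Lemma Bk_nil a b : 0 < cnt N a b -> (Bk N a b == [::]) = false.
Proof. by rewrite -size_Bk; case: (Bk N a b). Qed.

Lemma slice0n r : r \in N -> slice 0 n r = r.
Proof. by move=> hr; rewrite /slice drop0 subn0 take_oversize // gsize. Qed.

Lemma cnt_total : cnt N 0 n = n.
Proof.
rewrite /cnt (eq_in_count (a2 := predT)) ?count_predT //.
by move=> r hr; rewrite slice0n // gnz.
Qed.

Lemma Bk_total : Bk N 0 n = N.
Proof.
have E : map (slice 0 n) N = map id N.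
  by apply/eq_in_map => r hr; rewrite /= slice0n.
rewrite /Bk E map_id.
by apply/all_filterP/allP => r; apply: gnz.
Qed.

Lemma Bk_empty a : Bk N a a = [::].
Proof.
rewrite /Bk; elim: N => //= r s ->; by rewrite /slice subnn take0.
Qed.

Lemma cnt_empty a : cnt N a a = 0.
Proof. by rewrite -size_Bk Bk_empty. Qed.

Lemma cnt_sub a b c : a <= b -> b <= c -> cnt N a c <= cnt N a b + cnt N b c.
Proof.
move=> h1 h2; rewrite /cnt -count_predUI.
rewrite (eq_count (a2 := predU (fun r => nz (slice a b r)) (fun r => nz (slice b c r)))).
  by apply: leq_addr.
by move=> r; rewrite (nz_split r h1 h2).
Qed.

Lemma disj j r : j <= n -> cnt N 0 j + cnt N j n = n -> r \in N ->
  ~~ (nz (slice 0 j r) && nz (slice j n r)).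
Proof.
move=> hj hc hr; rewrite /cnt -count_predUI in hc.
have hU : count (predU (fun r => nz (slice 0 j r)) (fun r => nz (slice j n r))) N = n.
  rewrite -[RHS]cnt_total /cnt; apply: eq_count => r0 /=.
  by rewrite (nz_split r0 (leq0n j) hj).
rewrite hU in hc.
have /eqP : count (predI (fun r => nz (slice 0 j r)) (fun r => nz (slice j n r))) N = 0 by lia.
by rewrite -leqn0 leqNgt -has_count => /hasPn /(_ r hr).
Qed.

Definition cut (j : nat) := (cnt N 0 j == j) && (cnt N j n == n - j).

Lemma col_dec_E j : j <= n ->
  col_dec N j = ((Bk N 0 j == [::]) || (cnt N 0 j == j)) &&
                ((Bk N j n == [::]) || (cnt N j n == n - j)).
Proof.
move=> hj; rewrite /col_dec hj /= leftM_slice rightM_slice //.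
rewrite -{1}(subn0 j) cp_slice // cp_slice //.
rewrite (@is_square_Bk 0 j) // (@is_square_Bk j n) // subn0.
by [].
Qed.

Lemma col_dec_cut j : 0 < j -> j < n -> col_dec N j = cut j.
Proof.
move=> h1 h2; rewrite col_dec_E; last lia.
by rewrite !Bk_nil ?cnt_pos //; lia.
Qed.

Lemma col_dec0 : col_dec N 0.
Proof. by rewrite col_dec_E // Bk_empty subn0 cnt_total eqxx orbT. Qed.

Lemma col_decn : col_dec N n.
Proof. by rewrite col_dec_E // Bk_empty cnt_total !eqxx orbT. Qed.

Lemma lastN_in : N != [::] -> last [::] N \in N.
Proof. by case: N => // r s _ /=; rewrite mem_last. Qed.

End Good.

Lemma filter_split (T : eqType) (s : seq T) (p p1 p2 : pred T) :
  (forall x, x \in s -> p x = p1 x || p2 x) ->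
  (forall x, x \in s -> ~~ (p1 x && p2 x)) ->
  perm_eq (filter p s) (filter p1 s ++ filter p2 s).
Proof.
move=> h1 h2; apply/permP => a; rewrite count_cat !count_filter.
elim: s h1 h2 => //= x s IH h1 h2.
rewrite IH; last 2 first.
- by move=> y hy; apply: h1; rewrite inE hy orbT.
- by move=> y hy; apply: h2; rewrite inE hy orbT.
have := h1 x (mem_head _ _); have := h2 x (mem_head _ _).
by case: (p x); case: (p1 x); case: (p2 x); case: (a x) => //= _ _; lia.
Qed.

Definition NF (K : ringType) (N : mat) (P : nat -> bool) : seq (K * (mat * mat)) :=
  [seq (1%R, (Bk N 0 j, Bk N j (size N))) | j <- iota 0 (size N).+1 &
     [&& cut N j, 0 < j, j < size N & P j]].

Section Char.
Variable K : ringType.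
Variable N : mat.
Hypothesis gN : good N.
Let n := size N.

Lemma cp_left j : j <= n -> cp j (leftM j N) = Bk N 0 j.
Proof. by move=> h; rewrite leftM_slice -{1}(subn0 j) cp_slice. Qed.

Lemma cp_right j : j <= n -> cp (n - j) (rightM j N) = Bk N j n.
Proof. by move=> h; rewrite rightM_slice // cp_slice. Qed.

Lemma mapg_eq (P : nat -> bool) :
  {in filter P (iota 0 n.+1), (fun j => (1%R : K, (cp j (leftM j N), cp (n - j) (rightM j N))))
     =1 (fun j => (1%R, (Bk N 0 j, Bk N j n)))}.
Proof.
move=> j; rewrite mem_filter mem_iota => /andP[_ /andP[_ h]] /=.
by rewrite cp_left ?cp_right //; lia.
Qed.

Lemma lastrow_size : 0 < n -> size (lastrow N) = n.
Proof. move=> h; apply: (gsize gN); apply: lastN_in; move: h; rewrite /n; by case: (N). Qed.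

Lemma all0_nz s : all (fun a => a == 0%N) s = ~~ nz s.
Proof. by rewrite /nz -all_predC; apply: eq_all => a /=; rewrite negbK. Qed.

Lemma Dprec_NF : @Dprec K N = @NF K N (fun j => ~~ nz (slice j n (last [::] N))).
Proof.
rewrite /Dprec /NF -/n (eq_in_filter (a2 := fun j => [&& cut N j, 0 < j, j < n &
     ~~ nz (slice j n (last [::] N))])).
  by apply/eq_in_map; apply: mapg_eq.
move=> j _; case: (ltnP 0 j) => h1; last by rewrite !andbF.
case: (ltnP j n) => h2; last by rewrite !andbF.
rewrite (col_dec_cut gN h1 h2) all0_nz /slice /lastrow take_oversize //.
rewrite size_drop -/(lastrow N) lastrow_size //; lia.
Qed.

Lemma Dsucc_NF : @Dsucc K N = @NF K N (fun j => ~~ nz (slice 0 j (last [::] N))).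
Proof.
rewrite /Dsucc /NF -/n (eq_in_filter (a2 := fun j => [&& cut N j, 0 < j, j < n &
     ~~ nz (slice 0 j (last [::] N))])).
  by apply/eq_in_map; apply: mapg_eq.
move=> j _; case: (ltnP 0 j) => h1; last by rewrite !andbF.
case: (ltnP j n) => h2; last by rewrite !andbF.
by rewrite (col_dec_cut gN h1 h2) all0_nz /slice subn0 drop0.
Qed.

Lemma last_split j : 0 < j -> j < n -> cut N j ->
  (nz (slice 0 j (last [::] N)) != nz (slice j n (last [::] N))).
Proof.
move=> h1 h2 /andP[/eqP c1 /eqP c2].
have hin : last [::] N \in N by apply: lastN_in; move: h2; rewrite /n; case: (N).
have hj : j <= n by lia.
have hc : cnt N 0 j + cnt N j n = n by rewrite c1 c2 /n; lia.
have := disj gN hj hc hin.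
have hz := gnz gN hin; rewrite -(slice0n gN hin) (nz_split _ (leq0n j) (ltnW h2)) in hz.
move: hz; by case: (nz (slice 0 j _)); case: (nz (slice j n _)).
Qed.

Lemma jkey j : j \in iota 0 n.+1 ->
  [/\ col_dec N j = (j == 0) || (j == n) || [&& cut N j, j != 0 & j != n],
      (0 < j) = (j != 0), (j < n) = (j != n), 0 < n -> ~~ ((j == 0) && (j == n)) &
      [==> cut N j, j != 0, j != n => nz (slice 0 j (last [::] N)) != nz (slice j n (last [::] N))]].
Proof.
rewrite mem_iota => /andP[_ hj]; split.
- case: (ltnP 0 j) => h1.
    case: (ltnP j n) => h2.
      have e1 : (j == 0) = false by apply/negbTE; rewrite -lt0n.
      have e2 : (j == n) = false by apply/negbTE; rewrite neq_ltn h2.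
      by rewrite col_dec_cut // e1 e2 /= andbT.
    by rewrite (_ : j = n) ?col_decn ?eqxx ?orbT //; lia.
  by rewrite (_ : j = 0) ?col_dec0 //; lia.
- by rewrite lt0n.
- by rewrite ltn_neqAle andbC (_ : j <= n).
- by move=> hn; apply/negP => /andP[/eqP -> /eqP h]; lia.
- by apply/implyP => hc; apply/implyP => h1; apply/implyP => h2; apply: last_split => //; lia.
Qed.

Ltac brute j := let L := constr:(last [::] N) in
  case: (j == 0); case: (j == n); case: (cut N j);
  case: (nz (slice 0 j L)); case: (nz (slice j n L)) => //=; try by case.

Lemma Dbar_NF : perm_eq (@Dbar K N) (@NF K N (fun _ => true)).
Proof.
rewrite /Dbar Dprec_NF Dsucc_NF /NF -map_cat perm_sym; apply: perm_map.
apply: filter_split => j /jkey [_ -> -> _ H] /=; move: H; brute j.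
Qed.

Lemma Delta_perm : 0 < n -> perm_eq (@Delta K N)
   ((1%R, ([::], N)) :: @Dprec K N ++ @Dsucc K N ++ [:: (1%R, (N, [::]))]).
Proof.
move=> hn.
rewrite Dprec_NF Dsucc_NF /NF -/n.
set I := iota 0 n.+1.
set g := (fun j => (1%R : K, (Bk N 0 j, Bk N j n))).
have hI : uniq I by apply: iota_uniq.
apply: (@perm_trans _ (map g (filter (pred1 0) I ++ filter (fun j => [&& cut N j, 0 < j, j < n & ~~ nz (slice j n (last [::] N))]) I ++
           filter (fun j => [&& cut N j, 0 < j, j < n & ~~ nz (slice 0 j (last [::] N))]) I ++ filter (pred1 n) I))); last first.
  rewrite !map_cat !filter_pred1_uniq ?mem_iota //; last lia.
  have e0 : map g [:: 0] = [:: (1%R, ([::], N))] by rewrite /= /g Bk_empty Bk_total.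
  have e1 : map g [:: n] = [:: (1%R, (N, [::]))] by rewrite /= /g Bk_empty Bk_total.
  by rewrite e0 e1.
have E : @Delta K N = map g (filter (col_dec N) I) by rewrite /Delta; apply/eq_in_map; apply: mapg_eq.
rewrite E.
apply: perm_map.
apply: (perm_trans (@filter_split _ I (col_dec N) (pred1 0) (fun j => (j != 0) && col_dec N j) _ _)).
- move=> j /jkey [e0 e1 e2 /(_ hn) H1 H2] /=; rewrite ?e0 ?e1 ?e2; move: H1 H2; brute j.
- move=> j /jkey [e0 e1 e2 /(_ hn) H1 H2] /=; rewrite ?e0 ?e1 ?e2; move: H1 H2; brute j.
apply: seq.perm_cat; first exact: perm_refl.
apply: (perm_trans (@filter_split _ I (fun j => (j != 0) && col_dec N j)
   (fun j => [&& cut N j, 0 < j, j < n & ~~ nz (slice j n (last [::] N))])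
   (fun j => (0 < j) && ([&& cut N j, 0 < j, j < n & ~~ nz (slice 0 j (last [::] N))] || (j == n))) _ _)).
- move=> j /jkey [e0 e1 e2 /(_ hn) H1 H2] /=; rewrite ?e0 ?e1 ?e2; move: H1 H2; brute j.
- move=> j /jkey [e0 e1 e2 /(_ hn) H1 H2] /=; rewrite ?e0 ?e1 ?e2; move: H1 H2; brute j.
apply: seq.perm_cat; first exact: perm_refl.
apply: (perm_trans (@filter_split _ I
   (fun j => (0 < j) && ([&& cut N j, 0 < j, j < n & ~~ nz (slice 0 j (last [::] N))] || (j == n)))
   (fun j => [&& cut N j, 0 < j, j < n & ~~ nz (slice 0 j (last [::] N))]) (pred1 n) _ _)).
- move=> j /jkey [e0 e1 e2 /(_ hn) H1 H2] /=; rewrite ?e0 ?e1 ?e2; move: H1 H2; brute j.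
- move=> j /jkey [e0 e1 e2 /(_ hn) H1 H2] /=; rewrite ?e0 ?e1 ?e2; move: H1 H2; brute j.
by [].
Qed.

End Char.

Import GRing.Theory.

Section FS.
Local Open Scope ring_scope.
Variable K : ringType.

Lemma coef_cat (T : eqType) (a b : seq (K * T)) t : coef (a ++ b) t = coef a t + coef b t.
Proof. by rewrite /coef big_cat. Qed.

Lemma coef_perm (T : eqType) (a b : seq (K * T)) t : perm_eq a b -> coef a t = coef b t.
Proof. by move=> h; rewrite /coef (perm_big _ h). Qed.

Lemma coef_scale (T : eqType) c (a : seq (K * T)) t :
  coef [seq (c * q.1, q.2) | q <- a] t = c * coef a t.
Proof.
rewrite /coef big_map mulr_sumr; apply: eq_bigr => //.
Qed.

Lemma coef_ext (T U : eqType) (F : T -> seq (K * U)) x t :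
  coef (ext F x) t = \sum_(p <- x) p.1 * coef (F p.2) t.
Proof.
elim: x => [|p x IH]; first by rewrite /coef /ext big_nil big_nil.
by rewrite /ext /= coef_cat -/(ext F x) IH coef_scale big_cons.
Qed.

Lemma ext_feq (T U : eqType) (F G : T -> seq (K * U)) x :
  (forall p, p \in x -> feq (F p.2) (G p.2)) -> feq (ext F x) (ext G x).
Proof.
move=> h t; rewrite !coef_ext; apply: eq_big_seq => p hp; by rewrite (h p hp).
Qed.

Lemma ext_perm (T U : eqType) (F G : T -> seq (K * U)) x :
  (forall p, p \in x -> perm_eq (F p.2) (G p.2)) -> feq (ext F x) (ext G x).
Proof. by move=> h; apply: ext_feq => p hp t; apply: coef_perm; apply: h. Qed.

Definition scale (T : Type) c (a : seq (K * T)) := [seq (c * q.1, q.2) | q <- a].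

Lemma ext_cat (T U : Type) (F : T -> seq (K * U)) a b : ext F (a ++ b) = ext F a ++ ext F b.
Proof. by rewrite /ext map_cat flatten_cat. Qed.

Lemma ext_scale (T U : Type) (F : T -> seq (K * U)) c a :
  ext F (scale c a) = scale c (ext F a).
Proof.
elim: a => // q a IH; rewrite /= /ext /= -/(ext F a) -/(ext F (scale c a)) IH.
rewrite /scale map_cat -map_comp; congr (_ ++ _); apply: eq_map => r /=; by rewrite mulrA.
Qed.

Lemma ext_ext (T U V : Type) (F : U -> seq (K * V)) (G : T -> seq (K * U)) x :
  ext F (ext G x) = ext (fun m => ext F (G m)) x.
Proof.
elim: x => // p x IH.
have eG : ext G (p :: x) = scale p.1 (G p.2) ++ ext G x by [].
have eH : ext (fun m => ext F (G m)) (p :: x) = scale p.1 (ext F (G p.2)) ++ ext (fun m => ext F (G m)) x by [].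
by rewrite eG eH ext_cat IH ext_scale.
Qed.

Lemma reassoc_ext (T A B C : Type) (H : T -> seq (K * (A * (B * C)))) y :
  reassoc (ext H y) = ext (fun m => reassoc (H m)) y.
Proof.
elim: y => // p y IH.
rewrite /ext /= -/(ext H y) -/(ext (fun m => reassoc (H m)) y) /reassoc map_cat.
rewrite -/(reassoc (ext H y)) IH; congr (_ ++ _); rewrite -!map_comp; by apply: eq_map.
Qed.

Lemma ext_single (T U : Type) (f : T -> U) x :
  ext (fun m => [:: ((1 : K), f m)]) x = [seq (p.1, f p.2) | p <- x].
Proof.
elim: x => // p x IH; rewrite -[RHS]/((p.1, f p.2) :: [seq (p.1, f p.2) | p <- x]) -IH.
have -> : ext (fun m => [:: ((1 : K), f m)]) (p :: x) = (p.1 * 1, f p.2) :: ext (fun m => [:: ((1 : K), f m)]) x by [].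
by rewrite mulr1.
Qed.

Lemma coef_ext_cat (T U : eqType) (F G : T -> seq (K * U)) x t :
  coef (ext (fun m => F m ++ G m) x) t = coef (ext F x) t + coef (ext G x) t.
Proof.
rewrite !coef_ext -big_split; apply: eq_bigr => p _ /=; by rewrite coef_cat mulrDr.
Qed.

Lemma tens_idb_r (A B C : Type) (F : A -> seq (K * C)) a (b : B) :
  tens F (@idb K B) (a, b) = [seq (p.1 * 1, (p.2, b)) | p <- F a].
Proof. by rewrite /tens /=; elim: (F a) => //= p s ->. Qed.

Lemma tens_idb_l (A B D : Type) (G : B -> seq (K * D)) (a : A) b :
  tens (@idb K A) G (a, b) = [seq (1 * q.1, (a, q.2)) | q <- G b].
Proof. by rewrite /tens /= cats0. Qed.

Lemma ext_map (T U V : Type) (F : U -> seq (K * V)) (g : T -> K * U) js :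
  ext F (map g js) = flatten [seq [seq ((g j).1 * q.1, q.2) | q <- F (g j).2] | j <- js].
Proof. by rewrite /ext -map_comp. Qed.

End FS.

Section Pairs.
Variable T : eqType.

Lemma memP_pairs (s : seq nat) (t : nat -> seq nat) (u : nat -> nat -> nat * nat) z :
  reflect (exists x y, [/\ x \in s, y \in t x & z = u x y])
          (z \in flatten (map (fun x => map (u x) (t x)) s)).
Proof.
apply: (iffP flattenP).
  by move=> [l /mapP [x hx ->] /mapP [y hy ->]]; exists x, y.
move=> [x [y [hx hy ->]]]; exists (map (u x) (t x)); first exact: map_f.
exact: map_f.
Qed.

Lemma uniq_pairs (s : seq nat) (t : nat -> seq nat) (u : nat -> nat -> nat * nat) :
  uniq s -> (forall x, uniq (t x)) ->
  (forall x y x' y', u x y = u x' y' -> x = x' /\ y = y') ->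
  uniq (flatten (map (fun x => map (u x) (t x)) s)).
Proof.
move=> + ht hu; elim: s => //= x s IH /andP[hx hs].
rewrite cat_uniq IH // andbT map_inj_uniq ?ht //; last first.
  by move=> y1 y2 /hu [].
apply/hasPn => z /memP_pairs [x' [y' [hx' hy' ->]]]; apply/negP => /mapP [y hy /hu [e _]].
by move: hx; rewrite -e hx'.
Qed.

Lemma pairs_perm (f : nat * nat -> T) (s s' : seq nat) (t t' : nat -> seq nat)
   (u u' : nat -> nat -> nat * nat) :
  uniq s -> uniq s' -> (forall x, uniq (t x)) -> (forall x, uniq (t' x)) ->
  (forall x y x' y', u x y = u x' y' -> x = x' /\ y = y') ->
  (forall x y x' y', u' x y = u' x' y' -> x = x' /\ y = y') ->
  (forall x y, x \in s -> y \in t x -> exists x' y', [/\ x' \in s', y' \in t' x' & u x y = u' x' y']) ->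
  (forall x y, x \in s' -> y \in t' x -> exists x' y', [/\ x' \in s, y' \in t x' & u' x y = u x' y']) ->
  perm_eq (flatten (map (fun x => map f (map (u x) (t x))) s))
          (flatten (map (fun x => map f (map (u' x) (t' x))) s')).
Proof.
move=> us us' ut ut' iu iu' h1 h2.
have E : forall (s0 : seq nat) (t0 : nat -> seq nat) (u0 : nat -> nat -> nat * nat), flatten (map (fun x => map f (map (u0 x) (t0 x))) s0) =
   map f (flatten (map (fun x => map (u0 x) (t0 x)) s0)).
  by move=> s0 t0 u0; rewrite map_flatten -map_comp.
rewrite !E; apply: perm_map; apply: uniq_perm; try exact: uniq_pairs.
move=> z; apply/memP_pairs/memP_pairs.
  by move=> [x [y [hx hy ->]]]; have [x' [y' [? ? ->]]] := h1 x y hx hy; exists x', y'.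
by move=> [x [y [hx hy ->]]]; have [x' [y' [? ? ->]]] := h2 x y hx hy; exists x', y'.
Qed.

End Pairs.

Lemma good_Bk M a b : good M -> a <= b -> b <= size M -> cnt M a b = b - a -> good (Bk M a b).
Proof.
move=> gM h1 h2 hc; apply/and3P; split.
- rewrite size_Bk hc; apply/allP => r; rewrite /Bk mem_filter => /andP[_ /mapP[r0 hr0 ->]].
  by rewrite (size_slice gM).
- by apply/allP => r; rewrite /Bk mem_filter => /andP[].
- apply/allP => c; rewrite size_Bk hc mem_iota add0n => hc'.
  have := gcol gM (_ : a + c < size M) => /(_ ltac:(lia)) /hasP [r hr hrc].
  apply/hasP; exists (slice a b r); last by rewrite (@nth_slice a b r c) //; lia.
  rewrite /Bk mem_filter map_f // andbT; apply/hasP; exists (nth 0%N r (a + c)) => //.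
  rewrite -(@nth_slice a b r c); last lia.
  by apply: mem_nth; rewrite (size_slice gM) //; lia.
Qed.

Section Inner.
Variable K : ringType.
Variable M : mat.
Hypothesis gM : good M.
Let n := size M.
Let L := last [::] M.

Lemma NF_Bk a b P : a <= b -> b <= n -> cnt M a b = b - a ->
  @NF K (Bk M a b) P = map (fun i => (1%R, (Bk M a (a + i), Bk M (a + i) b)))
    (filter (fun i => [&& cnt M a (a + i) == i, cnt M (a + i) b == b - a - i, 0 < i, i < b - a & P i])
       (iota 0 (b - a).+1)).
Proof.
move=> h1 h2 hc; rewrite /NF size_Bk hc.
rewrite (eq_in_filter (a2 := fun i => [&& cnt M a (a + i) == i, cnt M (a + i) b == b - a - i, 0 < i, i < b - a & P i])).
  apply/eq_in_map => i; rewrite mem_filter mem_iota => /andP[_ hi] /=.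
  by rewrite !Bk_Bk ?addn0 ?subnKC //; lia.
move=> i; rewrite mem_iota => hi /=; rewrite /cut size_Bk hc !cnt_Bk ?addn0 ?subnKC //; lia.
Qed.

Lemma Dprec_Bk a b : a <= b -> b <= n -> cnt M a b = b - a -> nz (slice a b L) ->
  @Dprec K (Bk M a b) = map (fun i => (1%R, (Bk M a (a + i), Bk M (a + i) b)))
    (filter (fun i => [&& cnt M a (a + i) == i, cnt M (a + i) b == b - a - i, 0 < i, i < b - a &
        ~~ nz (slice (a + i) b L)]) (iota 0 (b - a).+1)).
Proof.
move=> h1 h2 hc hL.
have hM : M != [::] by move: hL; rewrite /L; case: (M).
rewrite Dprec_NF ?good_Bk // NF_Bk //; congr map; apply: eq_in_filter => i.
rewrite mem_iota => hi; rewrite size_Bk hc last_Bk // slice_comp ?subnKC //; lia.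
Qed.

Lemma Dsucc_Bk a b : a <= b -> b <= n -> cnt M a b = b - a -> nz (slice a b L) ->
  @Dsucc K (Bk M a b) = map (fun i => (1%R, (Bk M a (a + i), Bk M (a + i) b)))
    (filter (fun i => [&& cnt M a (a + i) == i, cnt M (a + i) b == b - a - i, 0 < i, i < b - a &
        ~~ nz (slice a (a + i) L)]) (iota 0 (b - a).+1)).
Proof.
move=> h1 h2 hc hL.
have hM : M != [::] by move: hL; rewrite /L; case: (M).
rewrite Dsucc_NF ?good_Bk // NF_Bk //; congr map; apply: eq_in_filter => i.
rewrite mem_iota => hi; rewrite last_Bk // slice_comp ?addn0 //; lia.
Qed.

Lemma Dbar_Bk a b : a <= b -> b <= n -> cnt M a b = b - a ->
  perm_eq (@Dbar K (Bk M a b)) (map (fun i => (1%R, (Bk M a (a + i), Bk M (a + i) b)))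
    (filter (fun i => [&& cnt M a (a + i) == i, cnt M (a + i) b == b - a - i, 0 < i, i < b - a &
        true]) (iota 0 (b - a).+1))).
Proof.
move=> h1 h2 hc; rewrite -NF_Bk //; apply: Dbar_NF; exact: good_Bk.
Qed.

End Inner.

Import GRing.Theory.

Lemma perm_flat_in (T U : eqType) (s : seq T) (F G : T -> seq U) :
  (forall x, x \in s -> perm_eq (F x) (G x)) ->
  perm_eq (flatten (map F s)) (flatten (map G s)).
Proof.
elim: s => //= x s IH h; apply: seq.perm_cat; first by apply: h; rewrite mem_head.
by apply: IH => y hy; apply: h; rewrite inE hy orbT.
Qed.

Section Main.
Variable K : ringType.
Variable M : mat.
Hypothesis gM : good M.
Let n := size M.
Hypothesis hn : 0 < n.
Let L := last [::] M.

Let I := iota 0 n.+1.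
Definition PPrec j := [&& cut M j, 0 < j, j < n & ~~ nz (slice j n L)].
Definition PSucc j := [&& cut M j, 0 < j, j < n & ~~ nz (slice 0 j L)].
Definition tprec a b := filter (fun i => [&& cnt M a (a + i) == i, cnt M (a + i) b == b - a - i, 0 < i, i < b - a &
        ~~ nz (slice (a + i) b L)]) (iota 0 (b - a).+1).
Definition tsucc a b := filter (fun i => [&& cnt M a (a + i) == i, cnt M (a + i) b == b - a - i, 0 < i, i < b - a &
        ~~ nz (slice a (a + i) L)]) (iota 0 (b - a).+1).
Definition tbar a b := filter (fun i => [&& cnt M a (a + i) == i, cnt M (a + i) b == b - a - i, 0 < i, i < b - a &
        true]) (iota 0 (b - a).+1).
Definition fT (z : nat * nat) := (1%R : K, ((Bk M 0 z.1, Bk M z.1 z.2), Bk M z.2 n)).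

Lemma hM : M != [::].
Proof. by move: hn; rewrite /n; case: (M). Qed.

Lemma XL : nz (slice 0 n L).
Proof.
have hin : L \in M by apply: lastN_in; exact: hM.
by rewrite (slice0n gM hin) (gnz gM hin).
Qed.

Lemma XLs a b : a <= b -> b <= n -> nz (slice a n L) = nz (slice a b L) || nz (slice b n L).
Proof. move=> h1 h2; exact: nz_split. Qed.

Lemma X0s a b : a <= b -> nz (slice 0 b L) = nz (slice 0 a L) || nz (slice a b L).
Proof. move=> h1; exact: nz_split. Qed.

Lemma cnt_LR i j : cnt M 0 j = j -> cnt M j n = n - j -> cnt M 0 i = i -> cnt M i j = j - i ->
  0 < i -> i < j -> j < n -> cnt M i n = n - i.
Proof.
move=> *; have := cnt_sub M (_ : i <= j) (_ : j <= n) => /(_ ltac:(lia) ltac:(lia)).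
have := cnt_sub M (_ : 0 <= i) (_ : i <= n) => /(_ ltac:(lia) ltac:(lia)).
have := cnt_total gM; rewrite -/n; lia.
Qed.

Lemma cnt_RL a b : cnt M 0 a = a -> cnt M a n = n - a -> cnt M a b = b - a -> cnt M b n = n - b ->
  0 < a -> a < b -> b < n -> cnt M 0 b = b.
Proof.
move=> *; have := cnt_sub M (_ : 0 <= a) (_ : a <= b) => /(_ ltac:(lia) ltac:(lia)).
have := cnt_sub M (_ : 0 <= b) (_ : b <= n) => /(_ ltac:(lia) ltac:(lia)).
have := cnt_total gM; rewrite -/n; lia.
Qed.

Lemma Dprec_M : @Dprec K M = map (fun j => (1%R, (Bk M 0 j, Bk M j n))) (filter PPrec I).
Proof. by rewrite (Dprec_NF K gM). Qed.

Lemma Dsucc_M : @Dsucc K M = map (fun j => (1%R, (Bk M 0 j, Bk M j n))) (filter PSucc I).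
Proof. by rewrite (Dsucc_NF K gM). Qed.

Lemma X0j j : j <= n -> ~~ nz (slice j n L) -> nz (slice 0 j L).
Proof. move=> h1 h2; have := XL; by rewrite (nz_split L (leq0n j) h1) (negbTE h2) orbF. Qed.

Lemma Xan a : a <= n -> ~~ nz (slice 0 a L) -> nz (slice a n L).
Proof. move=> h1 h2; have := XL; by rewrite (nz_split L (leq0n a) h1) (negbTE h2). Qed.

Ltac outer hj := move: hj; rewrite mem_filter mem_iota => /andP[/and4P[/andP[/eqP c1 /eqP c2] h1 h2 h3] _] /=.

Lemma lhs2 : ext (tens (@Dprec K) (@idb K mat)) (@Dprec K M) =
  flatten (map (fun j => map fT (map (fun i => (0 + i, j)) (tprec 0 j))) (filter PPrec I)).
Proof.
rewrite Dprec_M ext_map; congr flatten; apply/eq_in_map => j hj; outer hj.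
have hjn : j <= n by lia.
have e : cnt M 0 j = j - 0 by rewrite subn0.
rewrite tens_idb_r (@Dprec_Bk K M gM 0 j (leq0n j) hjn e (X0j hjn h3)).
rewrite -!map_comp; apply: eq_map => i /=; by rewrite /fT !GRing.mulr1.
Qed.

Lemma lhs3 : ext (tens (@Dsucc K) (@idb K mat)) (@Dprec K M) =
  flatten (map (fun j => map fT (map (fun i => (0 + i, j)) (tsucc 0 j))) (filter PPrec I)).
Proof.
rewrite Dprec_M ext_map; congr flatten; apply/eq_in_map => j hj; outer hj.
have hjn : j <= n by lia.
have e : cnt M 0 j = j - 0 by rewrite subn0.
rewrite tens_idb_r (@Dsucc_Bk K M gM 0 j (leq0n j) hjn e (X0j hjn h3)).
rewrite -!map_comp; apply: eq_map => i /=; by rewrite /fT !GRing.mulr1.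
Qed.

Lemma lhs4 : perm_eq (ext (tens (@Dbar K) (@idb K mat)) (@Dsucc K M))
  (flatten (map (fun j => map fT (map (fun i => (0 + i, j)) (tbar 0 j))) (filter PSucc I))).
Proof.
rewrite Dsucc_M ext_map; apply: perm_flat_in => j hj; outer hj.
rewrite tens_idb_r.
have hjn : j <= n by lia.
have e : cnt M 0 j = j - 0 by rewrite subn0.
apply: perm_trans; first by apply: perm_map; apply: perm_map; apply: (@Dbar_Bk K M gM 0 j (leq0n j) hjn e).
apply/permP => c; congr (count c _); rewrite -!map_comp; apply: eq_map => i /=; by rewrite /fT !GRing.mulr1.
Qed.

Lemma rhs2 : perm_eq (reassoc (ext (tens (@idb K mat) (@Dbar K)) (@Dprec K M)))
  (flatten (map (fun a => map fT (map (fun i => (a, a + i)) (tbar a n))) (filter PPrec I))).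
Proof.
rewrite Dprec_M ext_map /reassoc map_flatten -map_comp; apply: perm_flat_in => a ha; outer ha.
rewrite tens_idb_l.
have han : a <= n by lia.
apply: perm_trans; first by apply: perm_map; apply: perm_map; apply: perm_map; apply: (@Dbar_Bk K M gM a n han (leqnn n) c2).
apply/permP => c; congr (count c _); rewrite -!map_comp; apply: eq_map => i /=; by rewrite /fT !GRing.mul1r.
Qed.

Lemma rhs3 : reassoc (ext (tens (@idb K mat) (@Dprec K)) (@Dsucc K M)) =
  flatten (map (fun a => map fT (map (fun i => (a, a + i)) (tprec a n))) (filter PSucc I)).
Proof.
rewrite Dsucc_M ext_map /reassoc map_flatten -map_comp; congr flatten; apply/eq_in_map => a ha; outer ha.
have han : a <= n by lia.
rewrite tens_idb_l (@Dprec_Bk K M gM a n han (leqnn n) c2 (Xan han h3)).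
rewrite -!map_comp; apply: eq_map => i /=; by rewrite /fT !GRing.mul1r.
Qed.

Lemma rhs4 : reassoc (ext (tens (@idb K mat) (@Dsucc K)) (@Dsucc K M)) =
  flatten (map (fun a => map fT (map (fun i => (a, a + i)) (tsucc a n))) (filter PSucc I)).
Proof.
rewrite Dsucc_M ext_map /reassoc map_flatten -map_comp; congr flatten; apply/eq_in_map => a ha; outer ha.
have han : a <= n by lia.
rewrite tens_idb_l (@Dsucc_Bk K M gM a n han (leqnn n) c2 (Xan han h3)).
rewrite -!map_comp; apply: eq_map => i /=; by rewrite /fT !GRing.mul1r.
Qed.

Lemma XLs' a b : a <= b -> b <= n -> nz (slice a n L) = nz (slice a b L) || nz (slice b n L).
Proof. exact: XLs. Qed.
Lemma X0s' a b : a <= b -> nz (slice 0 b L) = nz (slice 0 a L) || nz (slice a b L).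
Proof. exact: X0s. Qed.

Lemma uniq_I (P : pred nat) : uniq (filter P I).
Proof. by apply: filter_uniq; apply: iota_uniq. Qed.
Lemma uniq_t (P : pred nat) m : uniq (filter P (iota 0 m)).
Proof. by apply: filter_uniq; apply: iota_uniq. Qed.

Lemma inj_u1 (x y x' y' : nat) : (0 + y, x) = (0 + y', x') -> x = x' /\ y = y'.
Proof. by case; rewrite !add0n. Qed.
Lemma inj_u2 (x y x' y' : nat) : (x, x + y) = (x', x' + y') -> x = x' /\ y = y'.
Proof. by case => e; rewrite e => /addnI. Qed.

Lemma coassoc2 : perm_eq (ext (tens (@Dprec K) (@idb K mat)) (@Dprec K M))
  (reassoc (ext (tens (@idb K mat) (@Dbar K)) (@Dprec K M))).
Proof.
have h := rhs2; rewrite perm_sym in h; rewrite lhs2; apply: (perm_trans _ h).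
apply: pairs_perm; try exact: uniq_I; try (move=> x; exact: uniq_t); try exact: inj_u1; try exact: inj_u2.
- move=> j i; rewrite /tprec !mem_filter !mem_iota /PPrec /PSucc /cut -/n !add0n !subn0 => hj hi.
  have hij : i <= j by lia.
  exists i, (j - i); rewrite /tbar !mem_filter !mem_iota /PPrec /PSucc /cut -/n subnKC // add0n; split => //.
  + have := @cnt_LR i j; have := @XLs' i j; lia.
  + have := @cnt_LR i j; lia.
- move=> a i; rewrite /tbar !mem_filter !mem_iota /PPrec /PSucc /cut -/n => ha hi.
  exists (a + i), a; rewrite /tprec !mem_filter !mem_iota /PPrec /PSucc /cut -/n !add0n !subn0; split => //.
  + have := @cnt_RL a (a + i); have := @XLs' a (a + i); lia.
  + have := @XLs' a (a + i); lia.
Qed.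

Lemma coassoc3 : perm_eq (ext (tens (@Dsucc K) (@idb K mat)) (@Dprec K M))
  (reassoc (ext (tens (@idb K mat) (@Dprec K)) (@Dsucc K M))).
Proof.
rewrite lhs3 rhs3.
apply: pairs_perm; try exact: uniq_I; try (move=> x; exact: uniq_t); try exact: inj_u1; try exact: inj_u2.
- move=> j i; rewrite /tsucc !mem_filter !mem_iota /PPrec /PSucc /cut -/n !add0n !subn0 => hj hi.
  have hij : i <= j by lia.
  exists i, (j - i); rewrite /tprec !mem_filter !mem_iota /PPrec /PSucc /cut -/n subnKC // add0n; split => //.
  + have := @cnt_LR i j; lia.
  + have := @cnt_LR i j; lia.
- move=> a i; rewrite /tprec !mem_filter !mem_iota /PPrec /PSucc /cut -/n => ha hi.
  exists (a + i), a; rewrite /tsucc !mem_filter !mem_iota /PPrec /PSucc /cut -/n !add0n !subn0; split => //.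
  + have := @cnt_RL a (a + i); lia.
  + lia.
Qed.

Lemma coassoc4 : perm_eq (ext (tens (@Dbar K) (@idb K mat)) (@Dsucc K M))
  (reassoc (ext (tens (@idb K mat) (@Dsucc K)) (@Dsucc K M))).
Proof.
apply: (perm_trans lhs4); rewrite rhs4.
apply: pairs_perm; try exact: uniq_I; try (move=> x; exact: uniq_t); try exact: inj_u1; try exact: inj_u2.
- move=> j i; rewrite /tbar !mem_filter !mem_iota /PPrec /PSucc /cut -/n !add0n !subn0 => hj hi.
  have hij : i <= j by lia.
  exists i, (j - i); rewrite /tsucc !mem_filter !mem_iota /PPrec /PSucc /cut -/n subnKC // add0n; split => //.
  + have := @cnt_LR i j; have := @X0s' i j; lia.
  + have := @cnt_LR i j; have := @X0s' i j; lia.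
- move=> a i; rewrite /tsucc !mem_filter !mem_iota /PPrec /PSucc /cut -/n => ha hi.
  exists (a + i), a; rewrite /tbar !mem_filter !mem_iota /PPrec /PSucc /cut -/n !add0n !subn0; split => //.
  + have := @cnt_RL a (a + i); have := @X0s' a (a + i); lia.
  + lia.
Qed.

End Main.

Theorem proposition2p8 (K : fieldType) (k : nat) :
  (1 <= k)%N ->
  forall x : seq (K * mat), in_PMplus k x ->
  [/\ feq (ext (@Delta K) x)
          (emptyL x ++ ext (@Dprec K) x ++ ext (@Dsucc K) x ++ emptyR x),
      feq (ext (tens (@Dprec K) (@idb K mat)) (ext (@Dprec K) x))
          (reassoc (ext (tens (@idb K mat) (@Dbar K)) (ext (@Dprec K) x))),
      feq (ext (tens (@Dsucc K) (@idb K mat)) (ext (@Dprec K) x))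
          (reassoc (ext (tens (@idb K mat) (@Dprec K)) (ext (@Dsucc K) x)))
    & feq (ext (tens (@Dbar K) (@idb K mat)) (ext (@Dsucc K) x))
          (reassoc (ext (tens (@idb K mat) (@Dsucc K)) (ext (@Dsucc K) x)))].
Proof.
move=> _ x hx.
have hp : forall p, p \in x -> good p.2 /\ 0 < size p.2.
  move=> p hp; move/allP: hx => /(_ p hp) /andP[hk hne].
  by split; [exact: packed_good hk | move: hne; case: (p.2)].
split.
- move=> t.
  rewrite (@ext_perm K _ _ (@Delta K)
     (fun m => [:: ((1%R : K), ([::] : mat, m))] ++ (@Dprec K m ++ (@Dsucc K m ++ [:: ((1%R : K), (m, [::] : mat))]))) x); last first.
    by move=> p /hp [g1 g2]; exact: (Delta_perm K g1 g2).
  rewrite !coef_ext_cat !coef_cat.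
  have -> : emptyL x = ext (fun m => [:: ((1%R : K), ([::] : mat, m))]) x by rewrite ext_single.
  have -> : emptyR x = ext (fun m => [:: ((1%R : K), (m, [::] : mat))]) x by rewrite ext_single.
  by [].
- rewrite ext_ext ext_ext reassoc_ext; apply: ext_perm => p /hp [g1 g2]; exact: coassoc2.
- rewrite ext_ext ext_ext reassoc_ext; apply: ext_perm => p /hp [g1 g2]; exact: coassoc3.
- rewrite ext_ext ext_ext reassoc_ext; apply: ext_perm => p /hp [g1 g2]; exact: coassoc4.
Qed.
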